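(* Let $p$ be a prime, let $c,d$ be positive integers, let $X$ be a set with $d$ elements, let $L_c(X)$ be the free nilpotent $\mathbb{Z}_p$-Lie algebra of class $c$ on $X$, regarded inside $\widetilde{L}_c(X)=L_c(X)\otimes_{\mathbb{Z}_p}\mathbb{Q}_p$, let $$\widehat{L}_c(X)=L_c(X)+\tfrac{1}{p}\gamma_2(L_c(X))+\dots+\tfrac{1}{p^{c-1}}\gamma_c(L_c(X)),$$ let $I$ be an ideal of $L_c(X)$ and let $$\widehat{I}=I+\tfrac{1}{p}[I,L_c(X)]+\dots+\tfrac{1}{p^{c-1}}[I,{}_{c-1}L_c(X)].$$ Then: (a) the order $\left|(L_c(X)\cap\widehat{I})/I\right|$ is bounded by a function of $p,c,d$ only; (b) the index $\left|\widehat{L}_c(X)/\widehat{I} : (L_c(X)+\widehat{I})/\widehat{I}\right|$ is bounded by a function of $p,c,d$ only.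
   Context: $L_c(X)$ is the free $\mathbb{Z}_p$-Lie algebra on $X$ modulo the $(c+1)$-st term of its lower central series; $\gamma_1(L)=L$, $\gamma_{i+1}(L)=[\gamma_i(L),L]$; $[I,{}_iL]=[\cdots[[I,L],L],\dots,L]$ with $i$ copies of $L$. Brackets of subsets denote $\mathbb{Z}_p$-spans of brackets. *)

(* Defs.v *)
From HB Require Import structures.
From mathcomp Require Import all_boot all_order all_algebra.
Set Implicit Arguments. Unset Strict Implicit. Unset Printing Implicit Defensive.
Import Order.TTheory GRing.Theory Num.Theory.
Local Open Scope ring_scope.

(* The ring of p-adic integers, characterised up to isomorphism:          *)
(* an integral domain R which is a DVR with uniformizer p (every nonzero  *)
(* element is a unit times a power of p, and p is not a unit), whose      *)
(* residue field R/pR is represented by 0,1,...,p-1, and which is p-adically *)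
(* complete.  (Such an R is isomorphic to Z_p.)                           *)
Definition is_Zp (p : nat) (R : idomainType) : Prop :=
  [/\ (p%:R : R) \isn't a GRing.unit,
      (forall x : R, x != 0 ->
         exists (n : nat) (u : R), u \is a GRing.unit /\ x = u * p%:R ^+ n),
      (forall x : R, exists2 k : nat, (k < p)%N & exists y : R, x = k%:R + p%:R * y)
    & (forall x : nat -> R,
         (forall n, exists y : R, x n.+1 - x n = p%:R ^+ n * y) ->
         exists l : R, forall n, exists y : R, l - x n = p%:R ^+ n * y)].

Section FreeNilpotent.
Variables (R : idomainType) (d c : nat).

(* Q_p = fraction field of Z_p *)
Definition Kf := {fraction R}.

(* Elements of the truncated free associative K-algebra on X = 'I_d,     *)
(* as coefficient functions on words (only words of length <= c matter). *)
Definition tens := seq 'I_d -> Kf.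

Definition tzero : tens := fun _ => 0.
Definition tadd (f g : tens) : tens := fun w => f w + g w.
Definition tsub (f g : tens) : tens := fun w => f w - g w.
Definition tscale (a : Kf) (f : tens) : tens := fun w => a * f w.
Definition tmul (f g : tens) : tens := fun w =>
  if (size w <= c)%N then \sum_(i < (size w).+1) f (take i w) * g (drop i w) else 0.
Definition tbr (f g : tens) : tens := tsub (tmul f g) (tmul g f).
Definition tgen (i : 'I_d) : tens := fun w => (w == [:: i])%:R.

(* L_c(X): the Z_p-Lie subalgebra generated by X inside the truncated     *)
(* free associative Q_p-algebra, i.e. the free nilpotent Z_p-Lie algebra  *)
(* of class c on X (regarded inside L_c(X) (x) Q_p).                      *)
Inductive Lc : tens -> Prop :=
  | Lc_gen i : Lc (tgen i)
  | Lc_zero : Lc tzero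
  | Lc_add f g : Lc f -> Lc g -> Lc (tadd f g)
  | Lc_scale (a : R) f : Lc f -> Lc (tscale (@FracField.tofrac R a) f)
  | Lc_br f g : Lc f -> Lc g -> Lc (tbr f g).

Inductive brspan (A B : tens -> Prop) : tens -> Prop :=
  | bs_br a b : A a -> B b -> brspan A B (tbr a b)
  | bs_zero : brspan A B tzero
  | bs_add f g : brspan A B f -> brspan A B g -> brspan A B (tadd f g)
  | bs_scale (a : R) f : brspan A B f -> brspan A B (tscale (@FracField.tofrac R a) f).

Fixpoint brpow (I : tens -> Prop) (i : nat) : tens -> Prop :=
  if i is i'.+1 then brspan (brpow I i') Lc else I.

(* lower central series: gamma_1 = L, gamma_(i+1) = [gamma_i, L] *)
Definition gammaL (i : nat) : tens -> Prop := brpow Lc i.-1.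

Definition is_ideal (I : tens -> Prop) : Prop :=
  [/\ forall f, I f -> Lc f,
      I tzero,
      (forall f g, I f -> I g -> I (tadd f g)),
      (forall (a : R) f, I f -> I (tscale (@FracField.tofrac R a) f))
    & (forall f g, I f -> Lc g -> I (tbr f g))].

Variable p : nat.

Definition hatI (I : tens -> Prop) : tens -> Prop := fun z =>
  exists ys : nat -> tens, (forall i, (i < c)%N -> brpow I i (ys i)) /\
    forall w, z w = \sum_(i < c) (p%:R : Kf) ^- i * ys i w.

Definition Lhat : tens -> Prop := fun z =>
  exists ys : nat -> tens, (forall i, (i < c)%N -> gammaL i.+1 (ys i)) /\
    forall w, z w = \sum_(i < c) (p%:R : Kf) ^- i * ys i w.

Definition sumset (A B : tens -> Prop) : tens -> Prop := fun z =>
  exists a b, A a /\ B b /\ z = tadd a b.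

(* |A / B| <= N  (for B a submodule of A): A is covered by at most N cosets of B *)
Definition quot_le (A B : tens -> Prop) (N : nat) : Prop :=
  exists r : 'I_N -> tens, forall z, A z -> exists j, B (tsub z (r j)).

End FreeNilpotent.

(* Main.v *)
Require Import Defs.
From mathcomp Require Import all_boot all_order all_algebra.
From Stdlib Require Import Classical FunctionalExtensionality IndefiniteDescription.
Set Implicit Arguments. Unset Strict Implicit. Unset Printing Implicit Defensive.
Import Order.TTheory GRing.Theory Num.Theory.
Local Open Scope ring_scope.

Lemma ex_min (P : nat -> Prop) : (exists n, P n) ->
  exists n, P n /\ forall m, P m -> (n <= m)%N.
Proof.
case=> n; elim: n {-2}n (leqnn n) => [|N IH] n le Pn.
  by exists n; split=> // m _; move: le; rewrite leqn0 => /eqP ->.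
case: (classic (exists m, P m /\ (m < n)%N)) => [[m [Pm lt]]|H].
  by apply: (IH m) => //; rewrite -ltnS (leq_trans lt le).
exists n; split=> // m Pm; rewrite leqNgt; apply/negP => lt; apply: H; by exists m.
Qed.

Section S.
Variables (R : idomainType) (d : nat).
Local Notation tf := (@FracField.tofrac R).
Local Notation T := (tens R d).
Local Notation t0 := (tzero R (d:=d)).

Definition submod (M : T -> Prop) :=
  [/\ M t0, (forall f g, M f -> M g -> M (tadd f g))
    & (forall a f, M f -> M (tscale (tf a) f))].

Definition lcomb (a : nat -> R) (gs : seq T) : T :=
  fun w => \sum_(i < size gs) tf (a i) * nth t0 gs i w.

Lemma lcomb_cons a g gs :
  lcomb a (g :: gs) = tadd (tscale (tf (a 0%N)) g) (lcomb (fun i => a i.+1) gs).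
Proof. by apply: functional_extensionality => w; rewrite /lcomb /= big_ord_recl. Qed.

Lemma lcomb_ext a b gs : (forall i, (i < size gs)%N -> a i = b i) ->
  lcomb a gs = lcomb b gs.
Proof.
move=> H; apply: functional_extensionality => w; rewrite /lcomb.
by apply: eq_bigr => i _; rewrite H.
Qed.

Lemma lcomb_in M a gs : submod M ->
  (forall i, (i < size gs)%N -> M (nth t0 gs i)) -> M (lcomb a gs).
Proof.
case=> M0 MD MZ; elim: gs a => [|g gs IH] a H.
  have -> : lcomb a [::] = t0 by apply: functional_extensionality => w; rewrite /lcomb big_ord0.
  done.
rewrite lcomb_cons; apply: MD; first by apply: MZ; exact: (H 0%N).
by apply: IH => i lt; exact: (H i.+1).
Qed.

Lemma sum_closed M n (ys : nat -> T) (a : nat -> R) : submod M ->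
  (forall i, (i < n)%N -> M (ys i)) -> M (fun w => \sum_(i < n) tf (a i) * ys i w).
Proof.
case=> M0 MD MZ; elim: n => [|n IH] H.
  have -> : (fun w => \sum_(i < 0) tf (a i) * ys i w) = t0.
    by apply: functional_extensionality => w; rewrite big_ord0.
  done.
have -> : (fun w => \sum_(i < n.+1) tf (a i) * ys i w) =
   tadd (fun w => \sum_(i < n) tf (a i) * ys i w) (tscale (tf (a n)) (ys n)).
  by apply: functional_extensionality => w; rewrite big_ord_recr.
apply: MD; first by apply: IH => i lt; apply: H; rewrite ltnS ltnW.
by apply: MZ; apply: H.
Qed.

Variable p : nat.
Local Notation pi := (p%:R : R).
Hypothesis Hval : forall x : R, x != 0 ->
  exists (n : nat) (u : R), u \is a GRing.unit /\ x = u * pi ^+ n.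

Lemma fg_sub (ws : seq (seq 'I_d)) : forall M, submod M ->
  (forall z, M z -> forall w, w \notin ws -> z w = 0) ->
  (forall z, M z -> exists F : seq 'I_d -> R, forall w, z w = tf (F w)) ->
  exists gs : seq T, size gs = size ws /\
    (forall i, (i < size gs)%N -> M (nth t0 gs i)) /\
    forall z, M z -> exists a, z = lcomb a gs.
Proof.
elim: ws => [|w ws IH] M [M0 MD MZ] Hsupp Hval'.
  exists [::]; split=> //; split=> // z Mz; exists (fun _ => 0).
  apply: functional_extensionality => w; rewrite /lcomb big_ord0.
  by apply: Hsupp.
pose M' := fun z => M z /\ z w = 0.
have sM' : submod M'.
  split; first by split.
    by move=> f g [Mf fw] [Mg gw]; split; [apply: MD | rewrite /tadd fw gw addr0].
  by move=> a f [Mf fw]; split; [apply: MZ | rewrite /tscale fw mulr0].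
have [gs [sz [Hgs Hrep]]] : exists gs : seq T, size gs = size ws /\
    (forall i, (i < size gs)%N -> M' (nth t0 gs i)) /\
    forall z, M' z -> exists a, z = lcomb a gs.
  apply: IH => //.
    move=> z [Mz zw] w' w'n; case: (eqVneq w' w) => [->//|ne].
    by apply: Hsupp => //; rewrite in_cons negb_or ne.
  by move=> z [Mz _]; apply: Hval'.
have [g0 [Mg0 Hg0]] : exists g0, M g0 /\ forall z, M z -> exists b, z w - tf b * g0 w = 0.
  case: (classic (exists z, M z /\ z w <> 0)) => [Hex|Hno]; last first.
    exists t0; split=> // z Mz; exists 0; rewrite /tzero mulr0 subr0.
    by apply: NNPP => ne; apply: Hno; exists z.
  pose P n := exists z, M z /\ exists u, u \is a GRing.unit /\ z w = tf (u * pi ^+ n).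
  have [n0 [[z0 [Mz0 [u0 [u0U z0w]]]] Hmin]] : exists n, P n /\ forall m, P m -> (n <= m)%N.
    apply: ex_min; case: Hex => z [Mz zw]; case: (Hval' z Mz) => F HF.
    have : F w != 0 by apply/eqP => F0; apply: zw; rewrite HF F0 rmorph0.
    case/Hval => n [u [uU Fw]]; exists n, z; split=> //; exists u; split=> //.
    by rewrite HF Fw.
  exists z0; split=> // z Mz; case: (Hval' z Mz) => F HF.
  case: (eqVneq (F w) 0) => [F0|Fn0].
    by exists 0; rewrite HF F0 !rmorph0 mul0r subr0.
  case/Hval: Fn0 => n [u [uU Fw]].
  have le : (n0 <= n)%N by apply: Hmin; exists z; split=> //; exists u; rewrite HF Fw.
  exists (u * u0^-1 * pi ^+ (n - n0)); rewrite HF z0w Fw -rmorphM; apply/eqP.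
  rewrite subr_eq0; apply/eqP; congr tf.
  rewrite -[in LHS](subnK le) exprD.
  rewrite -!mulrA; congr (_ * _); rewrite mulrCA; congr (_ * _).
  by rewrite mulrA mulVr // mul1r.
exists (g0 :: gs); split; first by rewrite /= sz.
split.
  by case=> [|i] /= lt; [ | case: (Hgs i lt)].
move=> z Mz; case: (Hg0 z Mz) => b Hb.
have M'z : M' (tadd z (tscale (tf (- b)) g0)).
  split; first by apply: MD => //; apply: MZ.
  by rewrite /tadd /tscale rmorphN mulNr.
case: (Hrep _ M'z) => a Ha.
exists (fun i => if i is i'.+1 then a i' else b); rewrite lcomb_cons -Ha.
apply: functional_extensionality => w'; rewrite /tadd /tscale rmorphN.
by rewrite mulNr addrCA subrr addr0.
Qed.

End S.

Fixpoint words (d n : nat) : seq (seq 'I_d) :=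
  if n is n'.+1 then [seq i :: w | i <- enum 'I_d, w <- words d n'] else [:: [::]].
Fixpoint allw (d n : nat) : seq (seq 'I_d) :=
  if n is n'.+1 then words d n ++ allw d n' else words d 0.

Lemma words_mem d (w : seq 'I_d) : w \in words d (size w).
Proof.
elim: w => [|i w IH]; first by rewrite /= mem_seq1.
by apply: (allpairs_f (fun i w => i :: w)) => //; rewrite mem_enum.
Qed.

Lemma allw_mem d n (w : seq 'I_d) : (size w <= n)%N -> w \in allw d n.
Proof.
elim: n => [|n IH] le.
  by move: le; rewrite leqn0 => /eqP/size0nil ->; rewrite mem_seq1.
rewrite mem_cat; case: (eqVneq (size w) n.+1) => [E|ne].
  by rewrite -E words_mem.
by rewrite IH ?orbT // -ltnS ltn_neqAle ne.
Qed.

Section S2.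
Variables (R : idomainType) (d c : nat).
Local Notation tf := (@FracField.tofrac R).
Local Notation T := (tens R d).
Local Notation t0 := (tzero R (d:=d)).
Hypothesis c_gt0 : (0 < c)%N.

Lemma Lc_submod : submod (Lc c : T -> Prop).
Proof. split; [exact: Lc_zero | exact: Lc_add | exact: Lc_scale]. Qed.

Lemma Lc_supp (z : T) : Lc c z -> forall w, (c < size w)%N -> z w = 0.
Proof.
elim=> [i||f g _ IHf _ IHg|a f _ IH|f g _ IHf _ IHg] w lt.
- rewrite /tgen; case: eqP => [E|//]; move: lt; rewrite E /=.
  by rewrite ltnNge c_gt0.
- by [].
- by rewrite /tadd IHf ?IHg ?addr0.
- by rewrite /tscale IH ?mulr0.
- by rewrite /tbr /tsub /tmul leqNgt lt /= subr0.
Qed.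

Lemma Lc_Rval (z : T) : Lc c z -> exists F : seq 'I_d -> R, forall w, z w = tf (F w).
Proof.
have mulE : forall (f g : T) (Ff Fg : seq 'I_d -> R), (forall w, f w = tf (Ff w)) -> (forall w, g w = tf (Fg w)) ->
   forall w, tmul c f g w = tf (if (size w <= c)%N then
      \sum_(i < (size w).+1) Ff (take i w) * Fg (drop i w) else 0).
  move=> f g Ff Fg Hf Hg w; rewrite /tmul; case: ifP => [_|_]; last by rewrite tofrac0.
  by rewrite raddf_sum; apply: eq_bigr => i _; rewrite Hf Hg -tofracM.
elim=> [i||f g _ [F HF] _ [Fg Hg]|a f _ [F HF]|f g _ [Ff Hf] _ [Fg Hg]].
- by exists (fun w => (w == [:: i])%:R) => w; rewrite /tgen rmorph_nat.
- by exists (fun _ => 0) => w; rewrite tofrac0.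
- by exists (fun w => F w + Fg w) => w; rewrite /tadd HF Hg tofracD. 
- by exists (fun w => a * F w) => w; rewrite /tscale HF tofracM.
- eexists => w; rewrite /tbr /tsub (mulE _ _ _ _ Hf Hg) (mulE _ _ _ _ Hg Hf) -tofracB.
  reflexivity.
Qed.

Lemma brpow_sub (P : T -> Prop) : submod P ->
  (forall f g, P f -> Lc c g -> P (tbr c f g)) ->
  forall i y, brpow c P i y -> P y.
Proof.
case=> P0 PD PZ Pbr; elim=> [//|i IH] y /=.
elim=> [a b Ha Hb|//|f g _ Hf _ Hg|a f _ Hf]; [ by apply: Pbr => //; apply: IH | by apply: PD | by apply: PZ].
Qed.

End S2.

Definition fbound (p c d : nat) := #|{ffun 'I_(size (allw d c)).+1 -> 'I_(p ^ c.-1)}|.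

Lemma pick_rep (R : idomainType) d (p c : nat) (gs : seq (tens R d))
  (sz : size gs = size (allw d c)) (kk : nat -> nat) (Hk : forall i, (kk i < p ^ c.-1)%N) :
  exists j : 'I_(fbound p c d),
    lcomb (fun i => (((enum_val j) (inord i) : 'I_(p ^ c.-1)) : nat)%:R) gs
    = lcomb (fun i => (kk i)%:R) gs.
Proof.
pose phi := [ffun o : 'I_(size (allw d c)).+1 => Ordinal (Hk o)].
exists (enum_rank phi); rewrite enum_rankK; apply: lcomb_ext => i lt.
by rewrite ffunE /= inordK // ltnS -sz ltnW.
Qed.

Theorem proposition3p5 :
  exists f : nat -> nat -> nat -> nat,
  forall (p c d : nat), prime p -> (0 < c)%N -> (0 < d)%N ->
  forall (R : idomainType), is_Zp p R ->
  forall I : tens R d -> Prop, is_ideal c I ->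
    quot_le (fun z => Lc c z /\ hatI c p I z) I (f p c d) /\
    quot_le (Lhat c p) (sumset (Lc c) (hatI c p I)) (f p c d).
Proof.
exists fbound => p c d pp c0 d0 R [Hnu Hval Hres Hcomp] I [Isub I0 ID IZ Ibr].
set k := c.-1.
set pi := (p%:R : R).
have Qpos : (0 < p ^ k)%N by rewrite expn_gt0 prime_gt0.
have Isubm : submod I by split.
have brI := brpow_sub Isubm Ibr.
have brL := brpow_sub (@Lc_submod R d c) (@Lc_br R d c).
have hat0 : hatI c p I (tzero R (d:=d)).
  exists (fun _ => tzero R (d:=d)); split.
    by case=> [|i] _ //=; exact: bs_zero.
  by move=> w; rewrite big1 // => i _; rewrite /tzero mulr0.
have tfp : (@FracField.tofrac R) pi = (p%:R : Kf R) by rewrite /pi tofracMn tofrac1.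
have ckE : c = k.+1 by rewrite /k prednK.
case: (eqVneq pi 0) => [pi0|pin0].
  have piK : (p%:R : Kf R) = 0 by rewrite -tfp pi0 tofrac0.
  have coll : forall (ys : nat -> tens R d) w,
      \sum_(i < c) (p%:R : Kf R) ^- i * ys i w = ys 0%N w.
    move=> ys w; rewrite ckE big_ord_recl /= expr0 invr1 mul1r big1 ?addr0 // => i _.
    by rewrite piK expr0n /= invr0 mul0r.
  pose j0 := enum_rank ([ffun _ => Ordinal Qpos] : {ffun 'I_(size (allw d c)).+1 -> 'I_(p ^ c.-1)}).
  split; exists (fun _ => tzero R (d:=d)) => z Hz; exists j0.
    case: Hz => _ [ys [Hys Hz]].
    have -> : tsub z (tzero R (d:=d)) = ys 0%N.
      by apply: functional_extensionality => w; rewrite /tsub /tzero subr0 Hz coll.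
    exact: (Hys 0%N c0).
  case: Hz => ys [Hys Hz].
  exists (ys 0%N), (tzero R (d:=d)); split; first exact: (brL 0%N _ (Hys 0%N c0)).
  split=> //; apply: functional_extensionality => w.
  by rewrite /tsub /tadd /tzero subr0 addr0 Hz coll.
have piKn : (@FracField.tofrac R) pi != 0 by rewrite tofrac_eq0.
set u := (@FracField.tofrac R) (pi ^+ k).
have un : u != 0 by rewrite /u tofracXn expf_neq0.
have Hscale : forall (z : tens R d) (ys : nat -> tens R d),
    (forall w, z w = \sum_(i < c) (p%:R : Kf R) ^- i * ys i w) ->
    tscale u z = (fun w => \sum_(i < c) (@FracField.tofrac R) (pi ^+ (k - i)) * ys i w).
  move=> z ys Hz; apply: functional_extensionality => w.
  rewrite /tscale Hz mulr_sumr; apply: eq_bigr => i _; rewrite mulrA; congr (_ * _).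
  have le : (i <= k)%N by rewrite -ltnS -ckE.
  rewrite /u -(subnK le) tofracXn exprD -tfp tofracXn.
  by rewrite addnK mulrK // unitrX // unitfE.
have Hres'' : forall m (x : R), exists mb : nat * R, (mb.1 < p ^ m)%N /\ x = (mb.1)%:R + pi ^+ m * mb.2.
  elim=> [|m IH] x.
    by exists (0%N, x); rewrite expr0 mul1r add0r.
  case: (IH x) => [[m1 y] [/= lt1 E1]].
  case: (Hres y) => m2 lt2 [y2 E2].
  exists ((m1 + p ^ m * m2)%N, y2); split=> /=.
    rewrite expnS; apply: (@leq_trans (p ^ m + p ^ m * m2)); first by rewrite ltn_add2r.
    by rewrite -mulnS mulnC leq_mul2r lt2 orbT.
  by rewrite E1 E2 natrD natrM natrX mulrDr addrA exprS mulrA [pi ^+ m * pi]mulrC.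
have Hres' := Hres'' k.
have split_lc : forall (a : nat -> R) (gs : seq (tens R d)), exists kk : nat -> nat, exists b : nat -> R,
    (forall i, (kk i < p ^ k)%N) /\
    lcomb a gs = tadd (lcomb (fun i => (kk i)%:R) gs) (tscale u (lcomb b gs)).
  move=> a gs; case: (functional_choice (fun (i : nat) (mb : nat * R) => (mb.1 < p ^ k)%N /\ a i = (mb.1)%:R + pi ^+ k * mb.2) (fun i => Hres' (a i))) => F HF.
  exists (fun i => (F i).1), (fun i => (F i).2); split; first by move=> i; case: (HF i).
  apply: functional_extensionality => w; rewrite /lcomb /tadd /tscale mulr_sumr -big_split.
  apply: eq_bigr => i _; case: (HF i) => _ ->.
  by rewrite tofracD tofracM mulrDl -mulrA.
have supp : forall z : tens R d, Lc c z -> forall w, w \notin allw d c -> z w = 0.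
  move=> z Lz w wn; apply: (Lc_supp c0 Lz); rewrite ltnNge; apply/negP => le.
  by move: wn; rewrite allw_mem.
split.
- pose M := fun z : tens R d => Lc c z /\ I (tscale u z).
  have sM : submod M.
    split.
    + split; first exact: Lc_zero.
      suff -> : tscale u (tzero R (d:=d)) = tzero R (d:=d) by [].
      by apply: functional_extensionality => w; rewrite /tscale /tzero mulr0.
    + move=> f g [Lf If] [Lg Ig]; split; first exact: Lc_add.
      suff -> : tscale u (tadd f g) = tadd (tscale u f) (tscale u g) by apply: ID.
      by apply: functional_extensionality => w; rewrite /tscale /tadd mulrDr.
    + move=> a f [Lf If]; split; first exact: Lc_scale.
      suff -> : tscale u (tscale ((@FracField.tofrac R) a) f) = tscale ((@FracField.tofrac R) a) (tscale u f) by apply: IZ.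
      by apply: functional_extensionality => w; rewrite /tscale mulrCA.
  have [gs [sz [Hgs Hrep]]] := fg_sub Hval sM
     (fun z Mz => supp z Mz.1) (fun z Mz => Lc_Rval Mz.1).
  exists (fun (j : 'I_(fbound p c d)) => lcomb (fun i => (((enum_val j) (inord i) : 'I_(p ^ c.-1)) : nat)%:R) gs).
  move=> z [Lz [ys [Hys Hz]]].
  have Mz : M z.
    split=> //; rewrite (Hscale z ys Hz); apply: (@sum_closed R d I c ys (fun i => pi ^+ (k - i))) => // i lt.
    exact: brI (Hys i lt).
  case: (Hrep z Mz) => a Ea.
  case: (split_lc a gs) => kk [b [Hk Eb]].
  case: (pick_rep sz Hk) => j Hj; exists j; rewrite Hj Ea Eb.
  have -> : tsub (tadd (lcomb (fun i => (kk i)%:R) gs) (tscale u (lcomb b gs)))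
      (lcomb (fun i => (kk i)%:R) gs) = tscale u (lcomb b gs).
    by apply: functional_extensionality => w; rewrite /tsub /tadd addrC addKr.
  by case: (lcomb_in b sM Hgs).
- have [gs [sz [Hgs Hrep]]] := fg_sub Hval (@Lc_submod R d c)
     (fun z Lz => supp z Lz) (fun z Lz => Lc_Rval Lz).
  exists (fun (j : 'I_(fbound p c d)) => tscale u^-1 (lcomb (fun i => (((enum_val j) (inord i) : 'I_(p ^ c.-1)) : nat)%:R) gs)).
  move=> z [ys [Hys Hz]].
  have Ly : Lc c (tscale u z).
    rewrite (Hscale z ys Hz); apply: (@sum_closed R d (Lc c) c ys (fun i => pi ^+ (k - i))); first exact: Lc_submod.
    by move=> i lt; exact: brL (Hys i lt).
  case: (Hrep _ Ly) => a Ea.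
  case: (split_lc a gs) => kk [b [Hk Eb]].
  case: (pick_rep sz Hk) => j Hj; exists j; rewrite Hj.
  exists (lcomb b gs), (tzero R (d:=d)); split; first exact: (lcomb_in b (@Lc_submod R d c) Hgs).
  split=> //; apply: functional_extensionality => w.
  have zw : z w = u^-1 * (tscale u z w) by rewrite /tscale mulKf.
  rewrite /tsub /tadd /tzero /tscale addr0 zw Ea Eb /tadd /tscale mulrDr mulKf //.
  by rewrite addrC addKr.
Qed.
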